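(* For $\varepsilon\in[0,1]$, let $C(\varepsilon)$ be the infimum of the Chernoff information $C(P,Q)$ over all pairs of probability distributions $P,Q$ (on a common countable set) with $d_{\mathrm{TV}}(P,Q)=\varepsilon$. Then this infimum is attained (it is a minimum) and $$C(\varepsilon)=\begin{cases}-\tfrac12\log(1-\varepsilon^2), & \varepsilon\in[0,1),\\ +\infty, & \varepsilon=1.\end{cases}$$ For $\varepsilon\in[0,1)$ the minimum is achieved by the 2-element distributions $P=\left(\frac{1-\varepsilon}{2},\frac{1+\varepsilon}{2}\right)$, $Q=\left(\frac{1+\varepsilon}{2},\frac{1-\varepsilon}{2}\right)$.
   Context: For probability distributions $P,Q$ on a common countable set: the total variation distance is $d_{\mathrm{TV}}(P,Q)=\frac12\sum_x |P(x)-Q(x)|$, and the Chernoff information is $C(P,Q)=-\min_{\lambda\in[0,1]}\log\left(\sum_x P(x)^{\lambda}Q(x)^{1-\lambda}\right)$ (with $\log 0=-\infty$, so $C(P,Q)$ may be $+\infty$). Logarithms are natural. *)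

(* Defs.v *)
From Stdlib Require Import Reals Lra.
Open Scope R_scope.

(* Distributions on the countable set nat (any countable set embeds in nat;
   extending by zeros changes neither d_TV nor the Chernoff information). *)
Definition is_distr (P : nat -> R) : Prop :=
  (forall n, 0 <= P n) /\ infinite_sum P 1.

(* d_TV(P,Q) = e, i.e. (1/2) * sum_x |P x - Q x| = e. *)
Definition tv_dist_is (P Q : nat -> R) (e : R) : Prop :=
  infinite_sum (fun n => Rabs (P n - Q n)) (2 * e).

(* x^y for x >= 0, y in [0,1], with the convention 0^0 = 1 and 0^y = 0 for y > 0. *)
Definition rpow0 (x y : R) : R :=
  if Rle_dec x 0 then (if Req_EM_T y 0 then 1 else 0) else Rpower x y.

Definition bhat_is (P Q : nat -> R) (lam s : R) : Prop :=
  infinite_sum (fun n => rpow0 (P n) lam * rpow0 (Q n) (1 - lam)) s.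

Definition bhat_inf_is (P Q : nat -> R) (m : R) : Prop :=
  (forall lam s, 0 <= lam <= 1 -> bhat_is P Q lam s -> m <= s) /\
  (forall m', (forall lam s, 0 <= lam <= 1 -> bhat_is P Q lam s -> m' <= s) -> m' <= m).

(* Extended nonnegative reals: None stands for +infinity. *)
Definition ext_le (a b : option R) : Prop :=
  match a, b with
  | _, None => True
  | None, Some _ => False
  | Some x, Some y => x <= y
  end.

(* C(P,Q) = c, where c = None means C(P,Q) = +infinity (log 0 = -infinity). *)
Definition chernoff_is (P Q : nat -> R) (c : option R) : Prop :=
  exists m, bhat_inf_is P Q m /\
    ((0 < m /\ c = Some (- ln m)) \/ (m = 0 /\ c = None)).

Definition C_eps (eps : R) : option R :=
  if Rlt_dec eps 1 then Some (- (1/2) * ln (1 - eps ^ 2)) else None.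

Definition P_eps (eps : R) (n : nat) : R :=
  match n with 0%nat => (1 - eps) / 2 | 1%nat => (1 + eps) / 2 | _ => 0 end.
Definition Q_eps (eps : R) (n : nat) : R :=
  match n with 0%nat => (1 + eps) / 2 | 1%nat => (1 - eps) / 2 | _ => 0 end.

(* Main.v *)
Require Import Defs.
From Stdlib Require Import Reals Lra Psatz Lia.
Open Scope R_scope.

Lemma isum_ext f g l : (forall n, f n = g n) -> infinite_sum f l -> infinite_sum g l.
Proof.
  intros E H e He. destruct (H e He) as [N HN]. exists N. intros n Hn.
  rewrite <- (sum_eq f g n) by (intros; apply E). now apply HN.
Qed.

Lemma isum_plus f g a b : infinite_sum f a -> infinite_sum g b ->
  infinite_sum (fun n => f n + g n) (a + b).
Proof.
  intros Hf Hg. pose proof (CV_plus _ _ _ _ Hf Hg) as H.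
  intros e He. destruct (H e He) as [N HN]. exists N. intros n Hn.
  rewrite sum_plus. now apply HN.
Qed.

Lemma isum_scal c f a : infinite_sum f a -> infinite_sum (fun n => c * f n) (c * a).
Proof.
  intros Hf.
  assert (Hc : Un_cv (fun _ : nat => c) c).
  { intros e He. exists 0%nat. intros. unfold R_dist. rewrite Rminus_diag, Rabs_R0. lra. }
  pose proof (CV_mult _ _ _ _ Hc Hf) as H.
  intros e He. destruct (H e He) as [N HN]. exists N. intros n Hn.
  assert (E : sum_f_R0 (fun n => c * f n) n = c * sum_f_R0 f n).
  { transitivity (sum_f_R0 (fun i => f i * c) n); [apply sum_eq; intros; ring | symmetry; apply scal_sum]. }
  rewrite E. now apply HN.
Qed.

Lemma isum_nonneg f a : infinite_sum f a -> (forall n, 0 <= f n) -> 0 <= a.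
Proof.
  intros Hf Hp.
  assert (Hc : Un_cv (fun _ : nat => 0) 0).
  { intros e He. exists 0%nat. intros. unfold R_dist. rewrite Rminus_diag, Rabs_R0. lra. }
  eapply Rle_cv_lim; [intro n; apply (cond_pos_sum f n Hp) | exact Hc | exact Hf].
Qed.

Lemma rpow0_nonneg x y : 0 <= rpow0 x y.
Proof.
  unfold rpow0. destruct (Rle_dec x 0). destruct (Req_EM_T y 0); lra.
  unfold Rpower. left; apply exp_pos.
Qed.

Lemma rpow0_half x : 0 <= x -> rpow0 x (1/2) = sqrt x.
Proof.
  intros Hx. unfold rpow0. destruct (Rle_dec x 0).
  - assert (x = 0) by lra. subst. rewrite sqrt_0. destruct (Req_EM_T (1/2) 0); lra.
  - replace (1/2) with (/2) by field. apply Rpower_sqrt. lra.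
Qed.

Lemma inf_exists P Q lam0 s0 : 0 <= lam0 <= 1 -> bhat_is P Q lam0 s0 ->
  exists m, bhat_inf_is P Q m /\ 0 <= m.
Proof.
  intros Hl Hs.
  set (E := fun x => exists lam s, 0 <= lam <= 1 /\ bhat_is P Q lam s /\ x = - s).
  assert (Hb : bound E).
  { exists 0. intros x [lam [s [_ [Hs' ->]]]].
    assert (0 <= s). { apply (isum_nonneg _ _ Hs'). intros n.
      apply Rmult_le_pos; apply rpow0_nonneg. } lra. }
  assert (Hne : exists x, E x) by (exists (- s0); exists lam0, s0; auto).
  destruct (completeness E Hb Hne) as [l [Hub Hlub]].
  exists (- l). split; [split|].
  - intros lam s Hlam Hs'. assert (- s <= l) by (apply Hub; exists lam, s; auto). lra.
  - intros m' Hm'. assert (l <= - m'). { apply Hlub. intros x [lam [s [H1 [H2 ->]]]].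
      specialize (Hm' lam s H1 H2). lra. } lra.
  - assert (l <= 0). { apply Hlub. intros x [lam [s [_ [Hs' ->]]]].
      assert (0 <= s). { apply (isum_nonneg _ _ Hs'). intros n.
      apply Rmult_le_pos; apply rpow0_nonneg. } lra. } lra.
Qed.

Lemma term_ineq a b t : 0 <= a -> 0 <= b ->
  2 * t * Rabs (a*a - b*b) <= t*t*((a-b)*(a-b)) + (a+b)*(a+b).
Proof.
  intros Ha Hb. destruct (Rle_dec a b).
  - rewrite Rabs_left1 by nra.
    pose proof (Rle_0_sqr (t*(b-a) - (a+b))). unfold Rsqr in *. nra.
  - rewrite Rabs_right by nra.
    pose proof (Rle_0_sqr (t*(a-b) - (a+b))). unfold Rsqr in *. nra.
Qed.

Lemma main_bound P Q eps : is_distr P -> is_distr Q -> tv_dist_is P Q eps ->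
  exists m B, bhat_inf_is P Q m /\ 0 <= m /\ m <= B /\ 0 <= B /\ B * B <= 1 - eps ^ 2.
Proof.
  intros [HP0 HP] [HQ0 HQ] Htv.
  set (g := fun n => sqrt (P n) * sqrt (Q n)).
  assert (Hg0 : forall n, 0 <= g n) by (intros; unfold g; apply Rmult_le_pos; apply sqrt_pos).
  assert (Hgle : forall n, g n <= (P n + Q n) / 2).
  { intros n. unfold g. pose proof (sqrt_sqrt _ (HP0 n)). pose proof (sqrt_sqrt _ (HQ0 n)).
    pose proof (Rle_0_sqr (sqrt (P n) - sqrt (Q n))). unfold Rsqr in *. nra. }
  assert (HPQ := isum_plus _ _ _ _ HP HQ).
  assert (HPQ2 := isum_scal (/2) _ _ HPQ).
  destruct (Rseries_CV_comp g (fun n => /2 * (P n + Q n))) as [B HB].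
  { intros n. split; auto. specialize (Hgle n). lra. }
  { exists (/2 * (1+1)). exact HPQ2. }
  change (infinite_sum g B) in HB.
  assert (HBs : bhat_is P Q (1/2) B).
  { unfold bhat_is. apply (isum_ext g); auto. intros n. unfold g.
    replace (1 - 1/2) with (1/2) by field. rewrite !rpow0_half; auto. }
  destruct (inf_exists P Q (1/2) B ltac:(lra) HBs) as [m [Hm Hm0]].
  exists m, B. assert (HB0 : 0 <= B) by (apply (isum_nonneg _ _ HB Hg0)).
  split; auto. split; auto. split. { apply (proj1 Hm (1/2) B ltac:(lra) HBs). }
  split; auto.
  assert (Hq : forall t, 0 <= (t*t+1)*1 + (t*t+1)*1 + (2 - 2*(t*t))*B + (-2*t)*(2*eps)).
  { intros t.
    pose proof (isum_plus _ _ _ _ (isum_plus _ _ _ _ (isum_plus _ _ _ _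
      (isum_scal (t*t+1) _ _ HP) (isum_scal (t*t+1) _ _ HQ))
      (isum_scal (2 - 2*(t*t)) _ _ HB)) (isum_scal (-2*t) _ _ Htv)) as H.
    apply (isum_nonneg _ _ H). intros n. simpl.
    pose proof (term_ineq (sqrt (P n)) (sqrt (Q n)) t (sqrt_pos _) (sqrt_pos _)) as T.
    rewrite !sqrt_sqrt in T by auto. unfold g.
    pose proof (sqrt_sqrt _ (HP0 n)). pose proof (sqrt_sqrt _ (HQ0 n)). nra. }
  assert (Heps0 : 0 <= eps).
  { assert (0 <= 2 * eps) by (apply (isum_nonneg _ _ Htv); intros; apply Rabs_pos). lra. }
  assert (HB1 : B <= 1).
  { assert (B <= / 2 * (1 + 1)); [|lra].
    eapply Rle_cv_lim; [|exact HB|exact HPQ2]. intro N. apply sum_Rle. intros n _.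
    specialize (Hgle n). lra. }
  destruct (Rle_lt_or_eq_dec B 1 HB1) as [Hlt|Heq].
  - specialize (Hq (eps / (1 - B))).
    assert (0 < 1 - B) by lra.
    replace ((eps / (1 - B)) * (eps / (1 - B))) with (eps*eps/((1-B)*(1-B))) in Hq by (field; lra).
    apply (Rmult_le_compat_r ((1-B))) in Hq; [|lra].
    rewrite Rmult_0_l in Hq.
    replace (((eps * eps / ((1 - B) * (1 - B)) + 1) * 1 + (eps * eps / ((1 - B) * (1 - B)) + 1) * 1 +
       (2 - 2 * (eps * eps / ((1 - B) * (1 - B)))) * B + -2 * (eps / (1 - B)) * (2 * eps)) * (1 - B))
      with (2 * (1 - B*B) - 2 * eps * eps) in Hq by (field; lra).
    simpl. nra.
  - subst B. destruct (Rle_lt_or_eq_dec 0 eps Heps0) as [Hp|Hz].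
    + specialize (Hq (2 / eps)). exfalso.
      replace ((2 / eps * (2 / eps) + 1) * 1 + (2 / eps * (2 / eps) + 1) * 1 + (2 - 2 * (2 / eps * (2 / eps))) * 1 +
        -2 * (2 / eps) * (2 * eps)) with (-4) in Hq by (field; lra). lra.
    + subst. simpl. lra.
Qed.

Lemma isum2 f : (forall n, (2 <= n)%nat -> f n = 0) -> infinite_sum f (f 0%nat + f 1%nat).
Proof.
  intros Hz.
  assert (K : forall k, sum_f_R0 f (S k) = f 0%nat + f 1%nat).
  { induction k. reflexivity. change (sum_f_R0 f (S (S k))) with (sum_f_R0 f (S k) + f (S (S k))).
    rewrite IHk, (Hz (S (S k))) by lia. ring. }
  intros e He. exists 1%nat. intros n Hn. destruct n; [lia|]. rewrite K.
  unfold R_dist. rewrite Rminus_diag, Rabs_R0. lra.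
Qed.

Lemma rpow0_zero lam : rpow0 0 lam * rpow0 0 (1 - lam) = 0.
Proof.
  unfold rpow0. destruct (Rle_dec 0 0); [|lra].
  destruct (Req_EM_T lam 0); destruct (Req_EM_T (1 - lam) 0); lra.
Qed.

Lemma rpow0_pos x y : 0 < x -> rpow0 x y = exp (y * ln x).
Proof. intros. unfold rpow0. destruct (Rle_dec x 0); [lra|]. reflexivity. Qed.

Lemma amgm X Y : 2 * exp ((X + Y) / 2) <= exp X + exp Y.
Proof.
  assert (E1 : exp X = exp (X/2) * exp (X/2)) by (rewrite <- exp_plus; f_equal; field).
  assert (E2 : exp Y = exp (Y/2) * exp (Y/2)) by (rewrite <- exp_plus; f_equal; field).
  assert (E3 : exp ((X+Y)/2) = exp (X/2) * exp (Y/2)) by (rewrite <- exp_plus; f_equal; field).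
  rewrite E1, E2, E3. pose proof (Rle_0_sqr (exp (X/2) - exp (Y/2))). unfold Rsqr in *. nra.
Qed.

Lemma part3 eps : 0 <= eps < 1 ->
     is_distr (P_eps eps) /\ is_distr (Q_eps eps) /\
     tv_dist_is (P_eps eps) (Q_eps eps) eps /\
     chernoff_is (P_eps eps) (Q_eps eps) (C_eps eps).
Proof.
  intros He.
  set (a := (1 - eps) / 2). set (b := (1 + eps) / 2).
  assert (Ha : 0 < a) by (unfold a; lra). assert (Hb : 0 < b) by (unfold b; lra).
  split; [|split; [|split]].
  - split. { intros [|[|n]]; simpl; lra. }
    replace 1 with (P_eps eps 0 + P_eps eps 1) by (simpl; field).
    apply isum2. intros [|[|n]] H; [lia|lia|reflexivity].
  - split. { intros [|[|n]]; simpl; lra. }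
    replace 1 with (Q_eps eps 0 + Q_eps eps 1) by (simpl; field).
    apply isum2. intros [|[|n]] H; [lia|lia|reflexivity].
  - unfold tv_dist_is.
    replace (2 * eps) with ((fun n => Rabs (P_eps eps n - Q_eps eps n)) 0%nat
       + (fun n => Rabs (P_eps eps n - Q_eps eps n)) 1%nat).
    + apply isum2. intros [|[|n]] H; [lia|lia|]. simpl. rewrite Rminus_diag. apply Rabs_R0.
    + simpl. rewrite Rabs_left1 by lra. rewrite Rabs_right by lra. field.
  - set (L := ln a + ln b).
    set (Bl := fun lam => exp (lam * ln a + (1 - lam) * ln b) + exp (lam * ln b + (1 - lam) * ln a)).
    assert (HBl : forall lam, bhat_is (P_eps eps) (Q_eps eps) lam (Bl lam)).
    { intros lam. unfold bhat_is.
      set (f := fun n => rpow0 (P_eps eps n) lam * rpow0 (Q_eps eps n) (1 - lam)).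
      replace (Bl lam) with (f 0%nat + f 1%nat).
      - apply isum2. intros [|[|n]] H; [lia|lia|]. unfold f. simpl. apply rpow0_zero.
      - unfold f, Bl. simpl. fold a b. rewrite !rpow0_pos by auto. rewrite <- !exp_plus. reflexivity. }
    assert (Hm : Bl (1/2) = 2 * exp (L / 2)).
    { unfold Bl, L. replace (1/2 * ln a + (1 - 1/2) * ln b) with ((ln a + ln b)/2) by field.
      replace (1/2 * ln b + (1 - 1/2) * ln a) with ((ln a + ln b)/2) by field. ring. }
    exists (Bl (1/2)). split; [split|].
    + intros lam s _ Hs. rewrite (uniqueness_sum _ _ _ Hs (HBl lam)), Hm. unfold Bl.
      replace (L / 2) with (((lam * ln a + (1 - lam) * ln b) + (lam * ln b + (1 - lam) * ln a)) / 2)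
        by (unfold L; field).
      apply amgm.
    + intros m' Hm'. apply (Hm' (1/2)); [lra | apply HBl].
    + left. rewrite Hm. split. { pose proof (exp_pos (L/2)). lra. }
      unfold C_eps. destruct (Rlt_dec eps 1); [|lra]. f_equal.
      rewrite ln_mult, ln_exp by (try lra; apply exp_pos).
      replace (1 - eps ^ 2) with ((2 * 2) * (a * b)) by (unfold a, b; field).
      rewrite !ln_mult by nra. unfold L. field.
Qed.

Definition Pd (n : nat) : R := match n with 0%nat => 1 | _ => 0 end.
Definition Qd (n : nat) : R := match n with 1%nat => 1 | _ => 0 end.

Theorem proposition2 (eps : R) (Heps : 0 <= eps <= 1) :
  (forall P Q : nat -> R, is_distr P -> is_distr Q -> tv_dist_is P Q eps ->
     exists c, chernoff_is P Q c /\ ext_le (C_eps eps) c) /\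
  (exists P Q : nat -> R, is_distr P /\ is_distr Q /\ tv_dist_is P Q eps /\
     chernoff_is P Q (C_eps eps)) /\
  (eps < 1 ->
     is_distr (P_eps eps) /\ is_distr (Q_eps eps) /\
     tv_dist_is (P_eps eps) (Q_eps eps) eps /\
     chernoff_is (P_eps eps) (Q_eps eps) (C_eps eps)).
Proof.
  split; [|split].
  - intros P Q HP HQ Htv.
    destruct (main_bound P Q eps HP HQ Htv) as [m [B [Hm [Hm0 [HmB [HB0 HBB]]]]]].
    destruct (Rle_lt_or_eq_dec 0 m Hm0) as [Hpos|Hz].
    + exists (Some (- ln m)). split. { exists m. split; auto. }
      unfold C_eps. destruct (Rlt_dec eps 1).
      * simpl. assert (ln (m * m) <= ln (1 - eps ^ 2)) by (destruct (Rle_lt_or_eq_dec (m*m) (1 - eps^2) ltac:(nra)) as [Hlt|Heq];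
          [left; apply ln_increasing; nra | right; rewrite Heq; reflexivity]).
        rewrite ln_mult in H by lra.
        change (-(1/2)*ln(1-eps^2) <= - ln m). lra.
      * exfalso. assert (eps = 1) by lra. subst. simpl in HBB.
        assert (B*B <= 0) by lra. nra.
    + exists None. split. { exists m. split; auto. }
      destruct (C_eps eps); exact I.
  - destruct (Rlt_dec eps 1) as [Hl|Hl].
    + exists (P_eps eps), (Q_eps eps). apply part3. lra.
    + assert (eps = 1) by lra. subst.
      assert (HP : is_distr Pd).
      { split. { intros [|[|n]]; simpl; lra. }
        replace 1 with (Pd 0 + Pd 1) by (simpl; ring).
        apply isum2. intros [|[|n]] H; [lia|lia|reflexivity]. }
      assert (HQ : is_distr Qd).
      { split. { intros [|[|n]]; simpl; lra. }
        replace 1 with (Qd 0 + Qd 1) by (simpl; ring).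
        apply isum2. intros [|[|n]] H; [lia|lia|reflexivity]. }
      assert (Htv : tv_dist_is Pd Qd 1).
      { unfold tv_dist_is.
        replace (2 * 1) with ((fun n => Rabs (Pd n - Qd n)) 0%nat
          + (fun n => Rabs (Pd n - Qd n)) 1%nat).
        + apply isum2. intros [|[|n]] H; [lia|lia|]. simpl. rewrite Rminus_diag. apply Rabs_R0.
        + simpl. rewrite Rabs_right by lra. rewrite Rabs_left1 by lra. ring. }
      exists Pd, Qd. split; [auto|split; [auto|split; [auto|]]].
      destruct (main_bound Pd Qd 1 HP HQ Htv) as [m [B [Hm [Hm0 [HmB [HB0 HBB]]]]]].
      unfold C_eps. destruct (Rlt_dec 1 1); [lra|].
      exists m. split; auto. right. split; auto. simpl in HBB.
      assert (B*B <= 0) by lra. nra.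
  - intros Hl. apply part3. lra.
Qed.
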